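(* Let $k\geq2$ and let $a_1\leq a_2\leq\dots\leq a_k$ be positive integers with $\gcd(a_1,\dots,a_k)=1$, let $S=\langle a_1,\dots,a_k\rangle$, and let $\alpha$ be an integer with $0\leq\alpha\leq a_1a_2$. Then $$n(S,\alpha)\leq\sum_{\lambda=0}^{\lfloor\alpha/a_1\rfloor}\left(\left\lfloor\frac{\alpha-\lambda a_1}{a_2}\right\rfloor+1\right)^{k-1}.$$
   Context: $S=\langle a_1,\dots,a_k\rangle=\{\lambda_1a_1+\dots+\lambda_ka_k:\lambda_i\in\mathbb{Z}_{\geq0}\}$; $n(S,\alpha)$ is the number of elements $s\in S$ with $s\leq\alpha$. *)

(* Defs.v *)
From mathcomp Require Import all_boot.
Set Implicit Arguments. Unset Strict Implicit. Unset Printing Implicit Defensive.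

Definition inSG (k : nat) (a : 'I_k -> nat) (s : nat) : Prop :=
  exists lam : 'I_k -> nat, \sum_(i < k) lam i * a i = s.

(* Boolean version: coefficients are searched in [0, s]; this agrees with inSG
   whenever all a_i are positive (then lam_i <= lam_i * a_i <= s). *)
Definition inSGb (k : nat) (a : 'I_k -> nat) (s : nat) : bool :=
  [exists lam : {ffun 'I_k -> 'I_s.+1}, \sum_(i < k) (lam i : nat) * a i == s].

Definition nS (k : nat) (a : 'I_k -> nat) (alpha : nat) : nat :=
  #|[set s : 'I_alpha.+1 | inSGb a s]|.

(* Main.v *)
Require Import Defs.
From mathcomp Require Import all_boot.
From mathcomp Require Import zify.

Theorem mainTheorem9 (k : nat) (a : 'I_k -> nat) (alpha : nat)
  (i1 i2 : 'I_k) :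
  2 <= k ->
  nat_of_ord i1 = 0 -> nat_of_ord i2 = 1 ->
  (forall i j : 'I_k, i <= j -> a i <= a j) ->
  (forall i, 0 < a i) ->
  \big[gcdn/0]_(i < k) a i = 1 ->
  alpha <= a i1 * a i2 ->
  nS a alpha <=
    \sum_(0 <= lam < (alpha %/ a i1).+1) ((alpha - lam * a i1) %/ a i2 + 1) ^ (k - 1).
Proof.
move=> hk h1 h2 hmono hpos _ _.
set B := [set lam : {ffun 'I_k -> 'I_alpha.+1} | \sum_i lam i * a i <= alpha].
have H1 : nS a alpha <= #|B|.
  rewrite /nS.
  apply: leq_trans (leq_imset_card (fun lam : {ffun 'I_k -> 'I_alpha.+1} =>
     (inord (\sum_i lam i * a i) : 'I_alpha.+1)) B).
  apply: subset_leq_card; apply/subsetP => s; rewrite inE => /existsP [lam /eqP Hs].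
  have Hl : forall i, lam i < alpha.+1.
    move=> i; apply: leq_trans (ltn_ord (lam i)) _; exact: ltn_ord s.
  have Hsum : \sum_i ([ffun i => (inord (lam i) : 'I_alpha.+1)] i : nat) * a i = s.
    apply: etrans Hs; apply: eq_bigr => i _; rewrite ffunE inordK //.
  apply/imsetP; exists [ffun i => (inord (lam i) : 'I_alpha.+1)].
    rewrite inE Hsum; have := ltn_ord s; lia.
  apply: val_inj; rewrite /= Hsum inordK //.
have Hbig : forall (lam : {ffun 'I_k -> 'I_alpha.+1}) i, lam \in B -> i != i1 ->
    lam i1 * a i1 + lam i * a i <= alpha.
  move=> lam i; rewrite inE => HB Hi.
  apply: leq_trans HB.
  rewrite (bigD1 i1) //= (bigD1 i) //= leq_add2l leq_addr //.
set G := fun l : nat => if l <= alpha %/ a i1 then ((alpha - l * a i1) %/ a i2 + 1) ^ (k - 1) else 0.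
have H2 : #|B| <= \sum_(l < alpha.+1) G l.
  rewrite -sum1_card (partition_big (fun lam : {ffun 'I_k -> 'I_alpha.+1} => lam i1) predT) //=.
  apply: leq_sum => l _.
  rewrite sum1_card.
  rewrite /G; case: ifP => Hl; last first.
    rewrite leqn0; apply/eqP; apply: eq_card0 => lam; rewrite !inE.
    apply/negP => /andP [HB /eqP Hl1].
    have : lam i1 * a i1 <= alpha.
      move: HB; rewrite ?inE; apply: leq_trans; rewrite (bigD1 i1) //= leq_addr //.
    rewrite Hl1 -leq_divRL ?hpos // Hl //.
  set m := (alpha - l * a i1) %/ a i2.
  have Hle : forall lam : {ffun 'I_k -> 'I_alpha.+1}, lam \in B -> lam i1 = l ->
      forall i, i != i1 -> lam i <= m.
    move=> lam HB Hl1 i Hi.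
    have := Hbig lam i HB Hi.
    have Ha : a i2 <= a i.
      apply: hmono; rewrite h2; move: Hi; rewrite -(inj_eq val_inj) /= h1; case: (nat_of_ord i) => //.
    rewrite Hl1 /m leq_divRL ?hpos // => H.
    apply: leq_trans (leq_mul (leqnn _) Ha) _; lia.
  have -> : k - 1 = #|'I_k.-1| by rewrite card_ord subn1.
  rewrite addn1 -(card_ord m.+1) -card_ffun.
  apply: (leq_card_in (fun lam : {ffun 'I_k -> 'I_alpha.+1} =>
     [ffun j : 'I_k.-1 => (inord (lam (lift i1 j)) : 'I_m.+1)]) [pred lam | (lam \in B) && (lam i1 == l)]).
  rewrite /=.
  move=> x y; rewrite !inE => /andP [Hx /eqP Hx1] /andP [Hy /eqP Hy1] E.
  apply/ffunP => i; apply: val_inj.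
  case: (unliftP i1 i) => [j ->|->]; last by rewrite Hx1 Hy1.
  have := congr1 (fun f : {ffun 'I_k.-1 -> 'I_m.+1} => (f j : nat)) E; rewrite /= !ffunE.
  have Hn : lift i1 j != i1 by rewrite eq_sym neq_lift.
  rewrite !inordK // ltnS; [apply: (Hle _ _ Hy1 _ Hn)|apply: (Hle _ _ Hx1 _ Hn)]; by rewrite inE.
apply: leq_trans H1 (leq_trans H2 _).
have Hd : (alpha %/ a i1).+1 <= alpha.+1 by rewrite ltnS leq_div.
rewrite -(big_mkord xpredT G) (big_cat_nat (leq0n (alpha %/ a i1).+1) Hd) /=.
rewrite [X in _ + X](_ : _ = 0) ?addn0; last first.
  rewrite big_nat_cond big1 // => l /andP [/andP [Hl _] _]; rewrite /G ifN // -ltnNge //.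
rewrite big_nat_cond [X in _ <= X]big_nat_cond; apply: leq_sum => l /andP [/andP [_ Hl] _].
move: Hl; rewrite ltnS => Hl; by rewrite /G Hl.
Qed.
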